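(* Let $\lambda$ be an infinite cardinal with $\lambda^{\aleph_0}=\lambda$, and let $C=\{\delta_\xi:\xi<\lambda^+\}\subseteq\lambda^+$ be a closed unbounded set enumerated in increasing order. Then there is a function $K:[\lambda^+]^{\aleph_0}\to\lambda$ such that whenever $A,B\in[\lambda^+]^{\aleph_0}$ satisfy $K(A)=K(B)$ and there is $\xi<\lambda^+$ with $A\cap[\delta_\xi,\delta_{\xi+1})\neq\emptyset$ and $B\cap[\delta_\xi,\delta_{\xi+1})\neq\emptyset$, then $A\cap\delta_{\xi+1}=B\cap\delta_{\xi+1}$. (Consequently, if $K(A)=K(B)$ then $A\cap B$ is an initial segment of both $A$ and $B$.)
   Context: $[\lambda^+]^{\aleph_0}$ denotes the set of countably infinite subsets of $\lambda^+$. Ordinals are identified with the sets of smaller ordinals, so $A\cap\delta$ is the set of elements of $A$ below $\delta$. *)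

(* Defs.v *)
(* Ordinals / cardinals are modelled abstractly:
   - a type [L] of cardinality lambda;
   - a type [P] with a strict well-order [lt] of order type lambda^+
     (characterised as: well-order, not injectable into L, every proper
      initial segment injectable into L). *)
From Stdlib Require Import Relations Wellfounded.

Definition injective {X Y : Type} (f : X -> Y) : Prop :=
  forall x y, f x = f y -> x = y.

Definition infinite_type (X : Type) : Prop :=
  exists f : nat -> X, injective f.

(* |X|^{aleph_0} = |X| (the inequality |X| <= |X|^{aleph_0} is trivial) *)
Definition pow_aleph0_eq (X : Type) : Prop :=
  exists f : (nat -> X) -> X, injective f.

Definition strict_well_order {P : Type} (lt : P -> P -> Prop) : Prop :=
  (forall x y z, lt x y -> lt y z -> lt x z) /\
  (forall x y, lt x y \/ x = y \/ lt y x) /\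
  well_founded lt.

Definition le {P : Type} (lt : P -> P -> Prop) (x y : P) : Prop :=
  lt x y \/ x = y.

Definition is_successor_cardinal_of (L P : Type) (lt : P -> P -> Prop) : Prop :=
  strict_well_order lt /\
  (forall x : P, exists f : {y : P | lt y x} -> L, injective f) /\
  ~ (exists f : P -> L, injective f).

Definition is_succ {P : Type} (lt : P -> P -> Prop) (xi eta : P) : Prop :=
  lt xi eta /\ forall z, lt xi z -> le lt eta z.

Definition unbounded {P : Type} (lt : P -> P -> Prop) (C : P -> Prop) : Prop :=
  forall x, exists c, C c /\ le lt x c.

Definition closed {P : Type} (lt : P -> P -> Prop) (C : P -> Prop) : Prop :=
  forall x,
    (exists c, C c /\ lt c x) ->
    (forall y, lt y x -> exists c, C c /\ lt y c /\ lt c x) ->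
    C x.

Definition club {P : Type} (lt : P -> P -> Prop) (C : P -> Prop) : Prop :=
  closed lt C /\ unbounded lt C.

Definition increasing_enumeration {P : Type} (lt : P -> P -> Prop)
    (C : P -> Prop) (delta : P -> P) : Prop :=
  (forall x y, lt x y -> lt (delta x) (delta y)) /\
  (forall c, C c <-> exists xi, delta xi = c).

Definition countably_infinite {P : Type} (A : P -> Prop) : Prop :=
  exists f : nat -> P, injective f /\ (forall x, A x <-> exists n, f n = x).

(* Main.v *)
Require Import Defs.
From Stdlib Require Import Classical ClassicalEpsilon.

Lemma wo_irrefl {P} (lt : P->P->Prop) : well_founded lt -> forall x, ~ lt x x.
Proof.
  intros wf x. induction x as [x IH] using (well_founded_ind wf).
  intros H. exact (IH x H H).
Qed.

Lemma name_lemma {L P : Type} (lt : P -> P -> Prop) (wf : well_founded lt)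
  (trans : forall x y z, lt x y -> lt y z -> lt x z)
  (g : forall x : P, {y : P | lt y x} -> L) (gi : forall x, injective (g x))
  (pr : L -> L -> L) (pri : forall a b c d, pr a b = pr c d -> a = c /\ b = d)
  (x x' : P) : lt x x' ->
  ~ (forall k, (exists (y z : {y | lt y x}), le lt (proj1_sig y) (proj1_sig z) /\ k = pr (g x y) (g x z)) <->
               (exists (y z : {y | lt y x'}), le lt (proj1_sig y) (proj1_sig z) /\ k = pr (g x' y) (g x' z))).
Proof.
  intros Hxx' Heq.
  assert (Hex: forall y (hy : lt y x'), exists u (hu : lt u x), g x (exist _ u hu) = g x' (exist _ y hy)).
  { intros y hy.
    destruct (proj2 (Heq (pr (g x' (exist _ y hy)) (g x' (exist _ y hy))))) as [[u hu] [[v hv] [Hle Hk]]].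
    - exists (exist _ y hy), (exist _ y hy). split; [right; reflexivity | reflexivity].
    - apply pri in Hk. destruct Hk as [H1 H2]. exists u, hu. symmetry; exact H1. }
  assert (Hmono : forall y hy z hz u hu v hv, lt y z ->
            g x (exist _ u hu) = g x' (exist _ y hy) ->
            g x (exist _ v hv) = g x' (exist _ z hz) -> lt u v).
  { intros y hy z hz u hu v hv Hyz Hu Hv.
    destruct (proj2 (Heq (pr (g x' (exist _ y hy)) (g x' (exist _ z hz))))) as [y1 [z1 [Hle Hk]]].
    - exists (exist _ y hy), (exist _ z hz). split; [left; exact Hyz | reflexivity].
    - apply pri in Hk. destruct Hk as [H1 H2].
      rewrite <- Hu in H1. rewrite <- Hv in H2.
      apply gi in H1. apply gi in H2. subst y1 z1. simpl in Hle.
      destruct Hle as [Hle|Hle]; [exact Hle|].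
      subst v. assert (hu = hv) by apply proof_irrelevance. subst hv.
      rewrite Hu in Hv. apply gi in Hv. injection Hv as Hv. subst z.
      exfalso; exact (wo_irrefl lt wf y Hyz). }
  assert (claim : forall y (hy : lt y x') u (hu : lt u x),
             g x (exist _ u hu) = g x' (exist _ y hy) -> ~ lt u y).
  { intros y. induction y as [y IH] using (well_founded_ind wf).
    intros hy u hu Hg Huy.
    assert (hu' : lt u x') by (eapply trans; eauto).
    destruct (Hex u hu') as [v [hv Hv]].
    assert (Hvu : lt v u) by (exact (Hmono u hu' y hy v hv u hu Huy Hv Hg)).
    exact (IH u Huy hu' v hv Hv Hvu). }
  destruct (Hex x Hxx') as [u [hu Hu]].
  exact (claim x Hxx' u hu Hu hu).
Qed.

Theorem lemma2 (L P : Type) (lt : P -> P -> Prop)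
  (HLinf : infinite_type L) (HLpow : pow_aleph0_eq L)
  (HP : is_successor_cardinal_of L P lt)
  (C : P -> Prop) (HC : club lt C)
  (delta : P -> P) (Hdelta : increasing_enumeration lt C delta) :
  exists K : (P -> Prop) -> L,
    forall A B : P -> Prop,
      countably_infinite A -> countably_infinite B ->
      K A = K B ->
      forall xi xi1 : P, is_succ lt xi xi1 ->
        (exists a, A a /\ le lt (delta xi) a /\ lt a (delta xi1)) ->
        (exists b, B b /\ le lt (delta xi) b /\ lt b (delta xi1)) ->
        forall x, lt x (delta xi1) -> (A x <-> B x).
Proof.
  destruct HP as [[Htr [Htri Hwf]] [Hinit _]].
  destruct HLpow as [h hinj]. destruct HLinf as [e einj].
  pose (l0 := e 0). pose (l1 := e 1).
  assert (l01 : l0 <> l1) by (intro H; apply einj in H; discriminate).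
  assert (Hg: forall x, {f : {y|lt y x} -> L | injective f})
    by (intro x; apply constructive_indefinite_description; apply Hinit).
  pose (g := fun x => proj1_sig (Hg x)).
  assert (gi : forall x, injective (g x)) by (intro x; exact (proj2_sig (Hg x))).
  pose (pr := fun i j : L => h (fun n => match n with 0 => i | _ => j end)).
  assert (pri : forall a b c d, pr a b = pr c d -> a = c /\ b = d).
  { intros a b c d H. apply hinj in H.
    pose proof (f_equal (fun f => f 0) H) as H0.
    pose proof (f_equal (fun f => f 1) H) as H1. cbv beta iota in H0, H1. auto. }
  pose (optL := fun o : option L => match o with None => h (fun _ => l0) | Some x => pr l1 x end).
  assert (optL_inj : forall o o', optL o = optL o' -> o = o').
  { intros [x|] [y|] H; unfold optL in H; try reflexivity.
    - apply pri in H. destruct H as [_ H]. subst; reflexivity.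
    - apply hinj in H. pose proof (f_equal (fun f => f 0) H) as H0. cbv beta iota in H0.
      exfalso; apply l01; symmetry; exact H0.
    - apply hinj in H. pose proof (f_equal (fun f => f 0) H) as H0. cbv beta iota in H0.
      exfalso; apply l01; exact H0. }
  pose (bitL := fun Q : Prop => if excluded_middle_informative Q then l1 else l0).
  assert (bit_spec : forall Q Q', bitL Q = bitL Q' -> (Q <-> Q')).
  { intros Q Q' H. unfold bitL in H.
    destruct (excluded_middle_informative Q), (excluded_middle_informative Q'); try tauto;
      exfalso; apply l01; congruence. }
  pose (name := fun x k => exists (y z : {y | lt y x}), le lt (proj1_sig y) (proj1_sig z) /\ k = pr (g x y) (g x z)).
  assert (name_diff : forall x x', x <> x' -> exists k, ~ (name x k <-> name x' k)).
  { intros x x' Hne. apply NNPP. intro Hn.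
    assert (Hall : forall k, name x k <-> name x' k).
    { intro k. apply NNPP. intro H. apply Hn. exists k. exact H. }
    destruct (Htri x x') as [H|[H|H]].
    - apply (name_lemma lt Hwf Htr g gi pr pri x x' H). exact Hall.
    - exact (Hne H).
    - apply (name_lemma lt Hwf Htr g gi pr pri x' x H). intro k. symmetry. exact (Hall k). }
  pose (w := fun z z' => match excluded_middle_informative (exists k, ~ (name z k <-> name z' k)) with
                         | left H => proj1_sig (constructive_indefinite_description _ H)
                         | right _ => l0 end).
  assert (w_spec : forall z z', z <> z' -> ~ (name z (w z z') <-> name z' (w z z'))).
  { intros z z' Hne. unfold w.
    destruct (excluded_middle_informative _) as [H|H].
    - exact (proj2_sig (constructive_indefinite_description _ H)).
    - exfalso. exact (H (name_diff z z' Hne)). }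
  assert (irr : forall x, ~ lt x x) by (apply wo_irrefl; exact Hwf).
  assert (dmono : forall x y, le lt x y -> le lt (delta x) (delta y)).
  { intros x y [H|H]; [left; apply (proj1 Hdelta); exact H | right; subst; reflexivity]. }
  assert (lt_le : forall x y z, lt x y -> le lt y z -> lt x z).
  { intros x y z H [H'|H']; [eapply Htr; eauto | subst; exact H]. }
  assert (le_lt : forall x y z, le lt x y -> lt y z -> lt x z).
  { intros x y z [H|H] H'; [eapply Htr; eauto | subst; exact H']. }
  assert (half : forall xi eta u v a, is_succ lt xi eta -> is_succ lt u v ->
            le lt (delta xi) a -> lt a (delta eta) -> le lt (delta u) a -> lt a (delta v) ->
            ~ lt xi u).
  { intros xi eta u v a [_ Hs] _ H1 H2 H3 H4 Hlt.
    apply (irr a). apply (lt_le a (delta eta) a H2).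
    destruct (dmono _ _ (Hs u Hlt)) as [Hd|Hd].
    - left. eapply lt_le; eauto.
    - rewrite Hd. exact H3. }
  assert (uniq : forall xi eta u v a, is_succ lt xi eta -> is_succ lt u v ->
            le lt (delta xi) a -> lt a (delta eta) -> le lt (delta u) a -> lt a (delta v) ->
            xi = u /\ eta = v).
  { intros xi eta u v a S1 S2 H1 H2 H3 H4.
    assert (xi = u).
    { destruct (Htri xi u) as [H|[H|H]]; [| exact H |].
      - exfalso; exact (half _ _ _ _ _ S1 S2 H1 H2 H3 H4 H).
      - exfalso; exact (half _ _ _ _ _ S2 S1 H3 H4 H1 H2 H). }
    subst u. split; [reflexivity|].
    destruct S1 as [Sa Sb], S2 as [Sc Sd].
    destruct (Sb v Sc) as [Hev|Hev]; [|exact Hev].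
    destruct (Sd eta Sa) as [Hve|Hve]; [|symmetry; exact Hve].
    exfalso; apply (irr eta); eapply Htr; eauto. }
  pose (iv := fun a => match excluded_middle_informative
                 (exists p : P*P, is_succ lt (fst p) (snd p) /\ le lt (delta (fst p)) a /\ lt a (delta (snd p))) with
              | left H => Some (proj1_sig (constructive_indefinite_description _ H))
              | right _ => None end).
  assert (iv_spec1 : forall a p, iv a = Some p ->
            is_succ lt (fst p) (snd p) /\ le lt (delta (fst p)) a /\ lt a (delta (snd p))).
  { intros a p H. unfold iv in H. destruct (excluded_middle_informative _) as [H'|H']; [|discriminate].
    injection H as H. subst p. exact (proj2_sig (constructive_indefinite_description _ H')). }
  assert (iv_spec2 : forall xi eta a, is_succ lt xi eta -> le lt (delta xi) a -> lt a (delta eta) ->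
            iv a = Some (xi, eta)).
  { intros xi eta a S H1 H2.
    destruct (iv a) as [[u v]|] eqn:E.
    - apply iv_spec1 in E. simpl in E. destruct E as [S' [H3 H4]].
      destruct (uniq _ _ _ _ _ S S' H1 H2 H3 H4). subst. reflexivity.
    - unfold iv in E. destruct (excluded_middle_informative _) as [H'|H']; [discriminate|].
      exfalso. apply H'. exists (xi, eta). simpl. auto. }
  pose (tr := fun (gam a : P) => match excluded_middle_informative (lt a gam) with
              | left H => Some (g gam (exist _ a H)) | right _ => None end).
  assert (tr_spec : forall gam a b, tr gam a = tr gam b -> lt a gam -> a = b).
  { intros gam a b H Ha. unfold tr in H.
    destruct (excluded_middle_informative (lt a gam)) as [Ha'|Ha']; [|contradiction].
    destruct (excluded_middle_informative (lt b gam)) as [Hb'|Hb']; [|discriminate].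
    injection H as H. apply gi in H. injection H as H. exact H. }
  pose (inner := fun (f : nat -> P) xi p => optL (match iv (f p) with None => None
             | Some q => Some (pr (w xi (fst q)) (bitL (name xi (w xi (fst q))))) end)).
  pose (item := fun (f : nat -> P) a => optL (match iv a with None => None
             | Some q => Some (pr (h (fun m => optL (tr (delta (snd q)) (f m))))
                                  (h (fun p => inner f (fst q) p))) end)).
  pose (code := fun f : nat -> P => h (fun n => item f (f n))).
  pose (K := fun A : P -> Prop => match excluded_middle_informative (countably_infinite A) with
             | left H => code (proj1_sig (constructive_indefinite_description _ H))
             | right _ => l0 end).
  assert (K_spec : forall A, countably_infinite A ->
            exists f, (forall x, A x <-> exists n, f n = x) /\ K A = code f).
  { intros A HA. unfold K. destruct (excluded_middle_informative _) as [H|H]; [|contradiction].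
    exists (proj1_sig (constructive_indefinite_description _ H)).
    split; [exact (proj2 (proj2_sig (constructive_indefinite_description _ H))) | reflexivity]. }
  exists K.
  intros A B HA HB HK xi xi1 Hs [a [Aa [Ha1 Ha2]]] [b [Bb [Hb1 Hb2]]] x Hx.
  destruct (K_spec A HA) as [fa [Hfa HKa]]. destruct (K_spec B HB) as [fb [Hfb HKb]].
  rewrite HKa, HKb in HK. unfold code in HK. apply hinj in HK.
  assert (Hitem : forall n, item fa (fa n) = item fb (fb n)).
  { intro n. exact (f_equal (fun F => F n) HK). }
  destruct (proj1 (Hfa a) Aa) as [i Hi]. destruct (proj1 (Hfb b) Bb) as [j Hj].
  assert (ivb : iv (fb j) = Some (xi, xi1)) by (rewrite Hj; apply iv_spec2; auto).
  assert (iva : iv (fa i) = Some (xi, xi1)) by (rewrite Hi; apply iv_spec2; auto).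
  pose proof (Hitem j) as Hij. unfold item in Hij. cbv beta in Hij. rewrite ivb in Hij.
  destruct (iv (fa j)) as [[u v]|] eqn:Hivaj.
  2: { apply optL_inj in Hij. discriminate. }
  apply optL_inj in Hij. injection Hij as Hij. apply pri in Hij. destruct Hij as [Htrq Hin].
  apply hinj in Htrq. apply hinj in Hin. simpl in Htrq, Hin.
  destruct (classic (u = xi)) as [Hu|Hu].
  - subst u.
    assert (v = xi1).
    { apply iv_spec1 in Hivaj. simpl in Hivaj. destruct Hivaj as [S' _].
      destruct Hs as [Sa Sb], S' as [Sc Sd].
      destruct (Sb v Sc) as [Hev|Hev]; [|symmetry; exact Hev].
      destruct (Sd xi1 Sa) as [Hve|Hve]; [|exact Hve].
      exfalso; apply (irr v); eapply Htr; eauto. }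
    subst v.
    split; intro H.
    + destruct (proj1 (Hfa x) H) as [m Hm].
      pose proof (f_equal (fun F => F m) Htrq) as Hm'. cbv beta in Hm'. apply optL_inj in Hm'.
      apply tr_spec in Hm'; [|rewrite Hm; exact Hx].
      apply Hfb. exists m. congruence.
    + destruct (proj1 (Hfb x) H) as [m Hm].
      pose proof (f_equal (fun F => F m) Htrq) as Hm'. cbv beta in Hm'. apply optL_inj in Hm'.
      symmetry in Hm'. apply tr_spec in Hm'; [|rewrite Hm; exact Hx].
      apply Hfa. exists m. congruence.
  - exfalso.
    pose proof (f_equal (fun F => F i) Hin) as Hi'. cbv beta in Hi'. unfold inner in Hi'.
    rewrite iva in Hi'.
    destruct (iv (fb i)) as [[z zz]|] eqn:E.
    2: { apply optL_inj in Hi'. discriminate. }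
    apply optL_inj in Hi'. injection Hi' as Hi'. apply pri in Hi'. destruct Hi' as [Hw Hbit].
    simpl in Hw, Hbit.
    apply bit_spec in Hbit. rewrite <- Hw in Hbit.
    exact (w_spec u xi Hu Hbit).
Qed.
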